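(* Let $\Omega$ be the unit square (if $d=2$) or the unit cube (if $d=3$), and let $\vec u:\Omega\times[0,T]\to\mathbb{R}^d$ with $\vec u\in C^0([0,T];W^{1,\infty}(\Omega))$ satisfy $\vec u\cdot\vec n=0$ on $\partial\Omega$, where $\vec n$ is the outward unit normal. Let $0<\Delta t<T$ be such that $\Delta t\,\|\vec u\|_{C^0([0,T];W^{1,\infty}(\Omega))}<1$. For $\vec x\in\Omega$ and $t\in[\Delta t,T]$ define $\vec y^t_{\Delta t}(\vec x)=\vec x-\Delta t\,\vec u(\vec x,t)$. Then for every $\vec x\in\Omega$ and every $t\in[\Delta t,T]$, $\vec y^t_{\Delta t}(\vec x)\in\Omega$. *)

(* Defs.v *)
From HB Require Import structures.
From mathcomp Require Import all_boot all_order all_algebra.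
From mathcomp Require Import reals.
Set Implicit Arguments. Unset Strict Implicit. Unset Printing Implicit Defensive.
Import Order.TTheory GRing.Theory Num.Theory.
Local Open Scope ring_scope.

Definition vec (R : realType) (d : nat) := 'I_d -> R.

Definition enorm (R : realType) (d : nat) (v : vec R d) : R :=
  Num.sqrt (\sum_(i < d) v i ^+ 2).

Definition vsub (R : realType) (d : nat) (v w : vec R d) : vec R d :=
  fun i => v i - w i.

Definition in_Omega (R : realType) (d : nat) (x : vec R d) : Prop :=
  forall i : 'I_d, 0 < x i < 1.
Definition in_cl_Omega (R : realType) (d : nat) (x : vec R d) : Prop :=
  forall i : 'I_d, 0 <= x i <= 1.

(* ||f||_{W^{1,infty}(Omega)} <= N, for f : Omega-bar -> R^d, with the
   W^{1,infty} norm max(||f||_infty, ||grad f||_infty); on the convex domain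
   Omega, ||grad f||_infty (operator norm of the Jacobian w.r.t. the Euclidean
   norm) is the best Lipschitz constant of (the continuous representative of) f. *)
Definition W1inf_le (R : realType) (d : nat) (f : vec R d -> vec R d) (N : R)
  : Prop :=
  (forall x, in_cl_Omega x -> enorm (f x) <= N) /\
  (forall x y, in_cl_Omega x -> in_cl_Omega y ->
     enorm (vsub (f x) (f y)) <= N * enorm (vsub x y)).

Definition in_W1inf (R : realType) (d : nat) (f : vec R d -> vec R d) : Prop :=
  exists N : R, W1inf_le f N.

Definition in_C0_W1inf (R : realType) (d : nat) (T : R)
  (u : vec R d -> R -> vec R d) : Prop :=
  (forall t, 0 <= t <= T -> in_W1inf (fun x => u x t)) /\
  (forall t0, 0 <= t0 <= T -> forall eps : R, 0 < eps ->
     exists2 delta : R, 0 < delta &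
       forall t, 0 <= t <= T -> `|t - t0| < delta ->
         W1inf_le (fun x => vsub (u x t) (u x t0)) eps).

Definition C0W1inf_le (R : realType) (d : nat) (T : R)
  (u : vec R d -> R -> vec R d) (N : R) : Prop :=
  forall t, 0 <= t <= T -> W1inf_le (fun x => u x t) N.

(* u . n = 0 on the boundary of the unit square/cube: on the faces
   {x_i = 0} and {x_i = 1} the outward normal is -e_i resp. e_i. *)
Definition no_flux (R : realType) (d : nat) (T : R)
  (u : vec R d -> R -> vec R d) : Prop :=
  forall t, 0 <= t <= T -> forall x, in_cl_Omega x ->
    forall i : 'I_d, (x i = 0 \/ x i = 1) -> u x t i = 0.

Definition foot (R : realType) (d : nat) (u : vec R d -> R -> vec R d)
  (dt t : R) (x : vec R d) : vec R d :=
  fun i => x i - dt * u x t i.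

(* Main.v *)
Require Import Defs.
From HB Require Import structures.
From mathcomp Require Import all_boot all_order all_algebra.
From mathcomp Require Import reals.
From mathcomp Require Import lra.
Import Order.TTheory GRing.Theory Num.Theory.
Local Open Scope ring_scope.

Lemma coord_le_enorm (R : realType) (d : nat) (v : vec R d) (i : 'I_d) :
  `|v i| <= enorm v.
Proof.
rewrite /enorm -sqrtr_sqr; apply: ler_wsqrtr.
rewrite (bigD1 i) //= lerDl; apply: sumr_ge0 => j _; exact: sqr_ge0.
Qed.

Lemma enorm_single (R : realType) (d : nat) (v : vec R d) (i : 'I_d) :
  (forall j, j != i -> v j = 0) -> enorm v = `|v i|.
Proof.
move=> H; rewrite /enorm (bigD1 i) //= big1 ?addr0 ?sqrtr_sqr // => j Hj.
by rewrite H // expr2 mulr0.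
Qed.

Theorem lemma2 (R : realType) (d : nat) (T dt : R)
  (u : vec R d -> R -> vec R d) :
  (d = 2 \/ d = 3)%N ->
  in_C0_W1inf T u ->
  no_flux T u ->
  0 < dt -> dt < T ->
  (exists N : R, C0W1inf_le T u N /\ dt * N < 1) ->
  forall (x : vec R d) (t : R), in_Omega x -> dt <= t <= T ->
    in_Omega (foot u dt t x).
Proof.
move=> _ _ nf dt0 _ [N [HN dtN]] x t xO /andP[dtt tT] i.
have t0 : 0 <= t <= T by rewrite tT andbT (le_trans (ltW dt0) dtt).
have [_ Lip] := HN t t0.
have xcl : in_cl_Omega x by move=> j; case/andP: (xO j) => a b; rewrite !ltW.
have [xi0 xi1] := andP (xO i).
set p := fun j => if j == i then 0 else x j.
set q := fun j => if j == i then 1 else x j.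
have pcl : in_cl_Omega p.
  by move=> j; rewrite /p; case: eqP => _; [rewrite lexx ler01 | exact: xcl].
have qcl : in_cl_Omega q.
  by move=> j; rewrite /q; case: eqP => _; [rewrite lexx ler01 | exact: xcl].
have up : u p t i = 0 by apply: nf => //; left; rewrite /p eqxx.
have uq : u q t i = 0 by apply: nf => //; right; rewrite /q eqxx.
have Hp := Lip x p xcl pcl.
have Hq := Lip x q xcl qcl.
rewrite [X in _ <= N * X](@enorm_single _ _ _ i) in Hp; last first.
  move=> j /negbTE Hj; rewrite /vsub /p /=. rewrite Hj subrr //.
rewrite [X in _ <= N * X](@enorm_single _ _ _ i) in Hq; last first.
  move=> j /negbTE Hj; rewrite /vsub /q /=; rewrite Hj subrr //.
move: Hp Hq; rewrite /vsub /p /q eqxx subr0.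
have := @coord_le_enorm _ _ (vsub (u x t) (u p t)) i.
have := @coord_le_enorm _ _ (vsub (u x t) (u q t)) i.
rewrite /vsub up uq subr0 => Aq Ap Bp Bq.
have e1 := le_trans Ap Bp. have e2 := le_trans Aq Bq.
rewrite (ger0_norm (ltW xi0)) in e1.
have x1 : 0 <= 1 - x i by rewrite subr_ge0 ltW.
rewrite distrC (ger0_norm x1) in e2.
move: e1 e2; rewrite !ler_norml => /andP[_ e1] /andP[e2 _].
have h1 : dt * u x t i <= dt * (N * x i) by rewrite ler_pM2l.
have h1' : dt * (- (N * (1 - x i))) <= dt * u x t i by rewrite ler_pM2l.
have h2 : dt * N * (1 - x i) < 1 - x i.
  by rewrite -[X in _ < X]mul1r ltr_pM2r // subr_gt0.
have h3 : dt * N * x i < x i.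
  by rewrite -[X in _ < X]mul1r ltr_pM2r.
rewrite /foot; apply/andP; split; lra.
Qed.
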